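(* If $m$ is a universal probability, then the map $\Sigma^*\ni s\mapsto m(s)I$ ($I$ the $N\times N$ identity) is a universal semi-POVM.
   Context: $N$ is a fixed positive integer; $\Sigma^*$ is the set of finite binary strings. $\mathrm{Her}(N)$ is the set of $N\times N$ Hermitian matrices and $\mathrm{Her}_Q(N)$ those with entries in $\{a+ib:a,b\in\mathbb{Q}\}$; $A\leqslant B$ means $B-A$ is positive semi-definite. A lower-computable semi-measure is a function $r:\Sigma^*\to[0,\infty)$ with $\sum_s r(s)\le 1$ such that there is a total recursive $f:\mathbb{N}\times\Sigma^*\to\mathbb{Q}$ with $\lim_{n}f(n,s)=r(s)$ and $f(n,s)\le f(n+1,s)$ for all $n,s$. A universal probability is a lower-computable semi-measure $m$ such that for every lower-computable semi-measure $r$ there is $c>0$ with $c\,r(s)\le m(s)$ for all $s$. A semi-POVM on $\Sigma^*$ is a map $R:\Sigma^*\to\mathrm{Her}(N)$ with $0\leqslant R(s)$ for all $s$ and $\sum_s R(s)\leqslant I$. A lower-computable semi-POVM is a semi-POVM $R$ for which there is a total recursive $f:\mathbb{N}\times\Sigma^*\to\mathrm{Her}_Q(N)$ with $\lim_{n}f(n,s)=R(s)$ and $f(n,s)\leqslant R(s)$ for all $n,s$. A universal semi-POVM is a lower-computable semi-POVM $M$ such that for every lower-computable semi-POVM $R$ there is $c>0$ with $c\,R(s)\leqslant M(s)$ for all $s\in\Sigma^*$. *)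

(* Defs.v *)
From HB Require Import structures.
From mathcomp Require Import all_boot all_order all_algebra.
From mathcomp Require Import complex.
From mathcomp Require Import all_classical all_reals topology normedtype sequences.

Set Implicit Arguments.
Unset Strict Implicit.
Unset Printing Implicit Defensive.

Import Order.TTheory GRing.Theory Num.Theory.
Import numFieldNormedType.Exports.
Local Open Scope ring_scope.
Local Open Scope classical_set_scope.

(* Computability: mu-recursive functions on nat (Kleene), used through the   *)
(* standard effective encodings [pickle] of countable types (binary strings, *)
(* rationals, Gaussian-rational matrices) into nat.                          *)

Inductive mucode : Type :=
| MZero
| MSucc
| MProj of nat
| MComp of mucode & seq mucode
| MPrec of mucode & mucode
| MMin of mucode.

Inductive mueval : mucode -> seq nat -> nat -> Prop :=
| ev_zero xs : mueval MZero xs 0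
| ev_succ x xs : mueval MSucc (x :: xs) x.+1
| ev_proj i xs : mueval (MProj i) xs (nth 0 xs i)
| ev_comp f gs xs ys z :
    muevals gs xs ys -> mueval f ys z -> mueval (MComp f gs) xs z
| ev_prec0 g h xs y :
    mueval g xs y -> mueval (MPrec g h) (0 :: xs) y
| ev_precS g h n xs z y :
    mueval (MPrec g h) (n :: xs) z -> mueval h (n :: z :: xs) y ->
    mueval (MPrec g h) (n.+1 :: xs) y
| ev_min f xs n :
    mueval f (n :: xs) 0 ->
    (forall k, (k < n)%N -> exists v, mueval f (k :: xs) v.+1) ->
    mueval (MMin f) xs n
with muevals : seq mucode -> seq nat -> seq nat -> Prop :=
| evs_nil xs : muevals [::] xs [::]
| evs_cons g gs xs y ys :
    mueval g xs y -> muevals gs xs ys -> muevals (g :: gs) xs (y :: ys).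

Definition total_recursive2 (A B C : countType) (f : A -> B -> C) : Prop :=
  exists e : mucode, forall a b,
    mueval e [:: pickle a; pickle b] (pickle (f a b)).

Notation bstring := (seq bool).

Definition semi_measure (R : realType) (r : bstring -> R) : Prop :=
  (forall s, 0 <= r s) /\
  (forall F : seq bstring, uniq F -> \sum_(s <- F) r s <= 1).

Definition lower_computable_semi_measure (R : realType) (r : bstring -> R) :=
  semi_measure r /\
  exists f : nat -> bstring -> rat,
    [/\ total_recursive2 f,
        (forall s, (fun n => (ratr (f n s) : R)) @ \oo --> r s) &
        (forall n s, f n s <= f n.+1 s)].

Definition universal_probability (R : realType) (m : bstring -> R) :=
  lower_computable_semi_measure m /\
  forall r : bstring -> R, lower_computable_semi_measure r ->
    exists2 c : R, 0 < c & forall s, c * r s <= m s.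

Local Open Scope complex_scope.

Definition adjmx (R : realType) m n (A : 'M[R[i]]_(m, n)) : 'M[R[i]]_(n, m) :=
  (map_mx Num.conj A)^T.

Definition hermitian (R : realType) (N : nat) (A : 'M[R[i]]_N) : Prop :=
  adjmx A = A.

Definition psdmx (R : realType) (N : nat) (A : 'M[R[i]]_N) : Prop :=
  hermitian A /\ forall v : 'cV[R[i]]_N, 0 <= (adjmx v *m A *m v) 0 0.

Definition loewner (R : realType) (N : nat) (A B : 'M[R[i]]_N) : Prop :=
  psdmx (B - A).

Definition gauss_to (R : realType) (z : rat[i]) : R[i] :=
  (ratr (complex.Re z) : R) +i* (ratr (complex.Im z) : R).

Definition gmx_to (R : realType) (N : nat) (A : 'M[rat[i]]_N) : 'M[R[i]]_N :=
  map_mx (@gauss_to R) A.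

Definition hermitian_Q (R : realType) (N : nat) (A : 'M[rat[i]]_N) : Prop :=
  hermitian (gmx_to R A).

Definition cvgC (R : realType) (u : nat -> R[i]) (z : R[i]) : Prop :=
  (fun n => complex.Re (u n)) @ \oo --> complex.Re z /\ (fun n => complex.Im (u n)) @ \oo --> complex.Im z.

Definition cvgmx (R : realType) (N : nat) (M : nat -> 'M[R[i]]_N)
  (L : 'M[R[i]]_N) : Prop :=
  forall i j, cvgC (fun n => M n i j) (L i j).

Definition semi_POVM (R : realType) (N : nat) (P : bstring -> 'M[R[i]]_N) :=
  (forall s, psdmx (P s)) /\
  (forall F : seq bstring, uniq F -> loewner (\sum_(s <- F) P s) 1%:M).

Definition lower_computable_semi_POVM (R : realType) (N : nat)
  (P : bstring -> 'M[R[i]]_N) :=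
  semi_POVM P /\
  exists f : nat -> bstring -> 'M[rat[i]]_N,
    [/\ total_recursive2 f,
        (forall n s, hermitian_Q R (f n s)),
        (forall s, cvgmx (fun n => gmx_to R (f n s)) (P s)) &
        (forall n s, loewner (gmx_to R (f n s)) (P s))].

Definition universal_semi_POVM (R : realType) (N : nat)
  (M : bstring -> 'M[R[i]]_N) :=
  lower_computable_semi_POVM M /\
  forall P : bstring -> 'M[R[i]]_N, lower_computable_semi_POVM P ->
    exists2 c : R, 0 < c & forall s, loewner (c%:C *: P s) (M s).

(* Main.v *)
Require Import Defs.
From HB Require Import structures.
From mathcomp Require Import all_boot all_order all_algebra.
From mathcomp Require Import complex.
From mathcomp Require Import all_classical all_reals topology normedtype sequences.
From mathcomp Require Import ring zify.

Set Implicit Arguments. Unset Strict Implicit. Unset Printing Implicit Defensive.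
Import Order.TTheory GRing.Theory Num.Theory.
Import numFieldNormedType.Exports.

Definition mtot (e : mucode) (G : seq nat -> nat) := forall xs, mueval e xs (G xs).
Definition code2 (e : mucode) (F : nat -> nat -> nat) := forall a b, mueval e [:: a; b] (F a b).
Definition code1 (e : mucode) (F : nat -> nat) := forall a, mueval e [:: a] (F a).

Lemma tot_zero : mtot MZero (fun _ => 0). Proof. by move=> xs; constructor. Qed.
Lemma tot_proj i : mtot (MProj i) (fun xs => nth 0 xs i). Proof. by move=> xs; constructor. Qed.
Lemma tot_comp1 c F g G : code1 c F -> mtot g G -> mtot (MComp c [:: g]) (fun xs => F (G xs)).
Proof. move=> hc hg xs; apply: ev_comp (hc _); do! constructor; exact: hg. Qed.
Lemma tot_comp2 c F g1 G1 g2 G2 : code2 c F -> mtot g1 G1 -> mtot g2 G2 ->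
  mtot (MComp c [:: g1; g2]) (fun xs => F (G1 xs) (G2 xs)).
Proof. move=> hc h1 h2 xs; apply: ev_comp (hc _ _); do! constructor; [exact: h1|exact: h2]. Qed.
Lemma code1_tot e G : mtot e G -> code1 e (fun a => G [:: a]). Proof. by move=> h a; apply: h. Qed.
Lemma code2_tot e G : mtot e G -> code2 e (fun a b => G [:: a; b]). Proof. by move=> h a b; apply: h. Qed.

Definition csucc := MComp MSucc [:: MProj 0].
Lemma tot_succ : mtot csucc (fun xs => (nth 0 xs 0).+1).
Proof. move=> xs; apply: ev_comp (ev_succ _ _); do! constructor. Qed.

Fixpoint prf (G : seq nat -> nat) (H : seq nat -> nat) n ys :=
  if n is n'.+1 then H (n' :: prf G H n' ys :: ys) else G ys.

Lemma ev_prec g G h H : mtot g G -> mtot h H ->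
  forall n ys, mueval (MPrec g h) (n :: ys) (prf G H n ys).
Proof.
move=> hg hh; elim=> [|n IH] ys /=; first by constructor.
by apply: ev_precS (IH ys) _.
Qed.

Lemma tot_prec g G h H : mtot g G -> mtot h H ->
  mtot (MComp (MPrec g h) [:: MProj 0; MProj 1])
        (fun xs => prf G H (nth 0 xs 0) [:: nth 0 xs 1]).
Proof.
move=> hg hh xs; apply: ev_comp (ev_prec hg hh _ _); do! constructor.
Qed.

Lemma ev_minP f F xs n : mtot f F -> F (n :: xs) = 0 ->
  (forall k, k < n -> F (k :: xs) <> 0) -> mueval (MMin f) xs n.
Proof.
move=> hf h0 hk; constructor; first by rewrite -h0.
move=> k /hk; case E: (F (k :: xs)) => [//|v] _; exists v; rewrite -E; exact: hf.
Qed.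

Definition cadd := MComp (MPrec (MProj 0) (MComp MSucc [:: MProj 1])) [:: MProj 0; MProj 1].
Lemma code_add : code2 cadd addn.
Proof.
have hh : mtot (MComp MSucc [:: MProj 1]) (fun xs => (nth 0 xs 1).+1).
  move=> xs; apply: ev_comp (ev_succ _ _); do! constructor.
move=> a b; have := tot_prec (tot_proj 0) hh [:: a; b] => /=.
suff -> : prf (fun xs => nth 0 xs 0) (fun xs => (nth 0 xs 1).+1) a [:: b] = a + b by [].
by elim: a => //= a ->.
Qed.

Definition cmul := MComp (MPrec MZero (MComp cadd [:: MProj 1; MProj 2])) [:: MProj 0; MProj 1].
Lemma code_mul : code2 cmul muln.
Proof.
have hh := tot_comp2 code_add (tot_proj 1) (tot_proj 2).
move=> a b; have := tot_prec tot_zero hh [:: a; b] => /=.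
suff -> : prf (fun=> 0) (fun xs => nth 0 xs 1 + nth 0 xs 2) a [:: b] = a * b by [].
by elim: a => //= a ->; rewrite mulSn addnC.
Qed.

Definition cpred := MComp (MPrec MZero (MProj 0)) [:: MProj 0; MProj 1].
Lemma code_pred : code1 cpred predn.
Proof.
move=> a; have := tot_prec tot_zero (tot_proj 0) [:: a] => /=.
by case: a.
Qed.
Definition csub' := MComp (MPrec (MProj 0) (MComp cpred [:: MProj 1])) [:: MProj 0; MProj 1].
Definition csub := MComp csub' [:: MProj 1; MProj 0].
Lemma code_sub : code2 csub subn.
Proof.
have hh := tot_comp1 code_pred (tot_proj 1).
have h' : code2 csub' (fun y x => x - y).
  move=> a b; have := tot_prec (tot_proj 0) hh [:: a; b] => /=.
  suff -> : prf (fun xs => nth 0 xs 0) (fun xs => (nth 0 xs 1).-1) a [:: b] = b - a by [].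
  by elim: a => [|a /= ->]; rewrite ?subn0 // subnS.
move=> a b; rewrite /csub; apply: ev_comp (h' b a); do! constructor.
Qed.

Fixpoint cconst n := if n is n'.+1 then MComp csucc [:: cconst n'] else MZero.
Lemma tot_const n : mtot (cconst n) (fun=> n).
Proof.
elim: n => [|n IH] xs /=; first by constructor.
apply: ev_comp (tot_succ [:: n]); do! constructor; exact: IH.
Qed.

Definition cpow2 := MComp (MPrec (cconst 1) (MComp cadd [:: MProj 1; MProj 1])) [:: MProj 0; MProj 1].
Lemma code_pow2 : code1 cpow2 (expn 2).
Proof.
have hh := tot_comp2 code_add (tot_proj 1) (tot_proj 1).
move=> a; have := tot_prec (tot_const 1) hh [:: a] => /=.
suff -> : prf (fun=> 1) (fun xs => nth 0 xs 1 + nth 0 xs 1) a [:: 0] = 2 ^ a by [].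
by elim: a => //= a ->; rewrite expnS mul2n addnn.
Qed.

Definition v2 x := if x == 0 then 0 else logn 2 x.

Lemma logn2_odd c : logn 2 c.*2.+1 = 0.
Proof.
apply/eqP; rewrite -leqn0 leqNgt logn_gt0 mem_primes /=.
by rewrite dvdn2 /= odd_double.
Qed.

Lemma v2_code a c : v2 (2 ^ a * c.*2.+1) = a.
Proof.
rewrite /v2 muln_eq0 expn_eq0 /=.
by rewrite lognM ?expn_gt0 // pfactorK // logn2_odd addn0.
Qed.

Lemma div_code a c : (2 ^ a * c.*2.+1) %/ 2 ^ a.+1 = c.
Proof.
rewrite expnSr divnMl ?expn_gt0 //.
by rewrite -[c.*2.+1]addn1 -muln2 divnMDl // divn_small // addn0.
Qed.

Definition cdivt := MComp csub [:: MComp csucc [:: MProj 1];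
   MComp cmul [:: MComp csucc [:: MProj 0]; MComp cpow2 [:: MProj 2]]].
Definition cdivp := MMin cdivt.
Lemma code_divp : code2 cdivp (fun x k => x %/ 2 ^ k).
Proof.
have ht : mtot cdivt (fun xs => (nth 0 xs 1).+1 - (nth 0 xs 0).+1 * 2 ^ (nth 0 xs 2)).
  apply: tot_comp2 code_sub _ _.
    by apply: (tot_comp1 (code1_tot tot_succ) (tot_proj 1)).
  apply: tot_comp2 code_mul _ _.
    by apply: (tot_comp1 (code1_tot tot_succ) (tot_proj 0)).
  by apply: (tot_comp1 code_pow2 (tot_proj 2)).
move=> x k; apply: (ev_minP ht) => /=.
  by apply/eqP; rewrite subn_eq0; apply: ltn_ceil; rewrite expn_gt0.
move=> q hq; apply/eqP; rewrite subn_eq0 -ltnNge ltnS.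
by rewrite -leq_divRL ?expn_gt0.
Qed.

Definition cmodp := MComp csub [:: MProj 0; MComp cmul [:: MComp cdivp [:: MProj 0; MProj 1]; MComp cpow2 [:: MProj 1]]].
Lemma code_modp : code2 cmodp (fun x k => x %% 2 ^ k).
Proof.
have h : mtot cmodp (fun xs => nth 0 xs 0 - (nth 0 xs 0 %/ 2 ^ nth 0 xs 1) * 2 ^ nth 0 xs 1).
  apply: tot_comp2 code_sub (tot_proj 0) _.
  apply: tot_comp2 code_mul _ _.
    exact: tot_comp2 code_divp (tot_proj 0) (tot_proj 1).
  exact: tot_comp1 code_pow2 (tot_proj 1).
move=> x k; have := h [:: x; k] => /=.
suff -> : x - x %/ 2 ^ k * 2 ^ k = x %% 2 ^ k by [].
by rewrite {1}(divn_eq x (2 ^ k)) addKn.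
Qed.

Definition cv2t := MComp cmul [:: MProj 1; MComp csub [:: cconst 1;
      MComp cmodp [:: MProj 1; MComp csucc [:: MProj 0]]]].
Definition cv2 := MMin cv2t.
Lemma code_v2 : code1 cv2 v2.
Proof.
have ht : mtot cv2t (fun xs => nth 0 xs 1 * (1 - nth 0 xs 1 %% 2 ^ (nth 0 xs 0).+1)).
  apply: tot_comp2 code_mul (tot_proj 1) _.
  apply: tot_comp2 code_sub (tot_const 1) _.
  apply: tot_comp2 code_modp (tot_proj 1) _.
  exact: tot_comp1 (code1_tot tot_succ) (tot_proj 0).
move=> x; apply: (ev_minP ht) => /=; rewrite /v2.
  case: eqP => [->|/eqP x0] //; rewrite -lt0n in x0.
  apply/eqP; rewrite muln_eq0 subn_eq0 lt0n; apply/orP; right.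
  apply/negP=> h; move: (h : 2 ^ (logn 2 x).+1 %| x).
  by rewrite pfactor_dvdn // ltnn.
move=> k; case: eqP => [->|/eqP x0] //; rewrite -lt0n in x0 => hk.
have : 2 ^ k.+1 %| x by rewrite pfactor_dvdn.
rewrite /dvdn => /eqP ->; rewrite subn0 muln1; apply/eqP; rewrite -lt0n //.
Qed.

Definition tl x := x %/ 2 ^ (v2 x).+1.
Lemma code_cons a s : CodeSeq.code (a :: s) = 2 ^ a * (CodeSeq.code s).*2.+1.
Proof. by []. Qed.
Lemma v2_cons a s : v2 (CodeSeq.code (a :: s)) = a.
Proof. by rewrite code_cons v2_code. Qed.
Lemma tl_cons a s : tl (CodeSeq.code (a :: s)) = CodeSeq.code s.
Proof. by rewrite /tl v2_cons code_cons div_code. Qed.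
Lemma v2_0 : v2 0 = 0. Proof. by []. Qed.
Lemma tl_0 : tl 0 = 0. Proof. by rewrite /tl div0n. Qed.

Definition ctl := MComp cdivp [:: MProj 0; MComp csucc [:: MComp cv2 [:: MProj 0]]].
Lemma code_tl : code1 ctl tl.
Proof.
apply: (@code1_tot _ (fun xs => tl (nth 0 xs 0))).
apply: tot_comp2 code_divp (tot_proj 0) _.
apply: tot_comp1 (code1_tot tot_succ) _.
exact: tot_comp1 code_v2 (tot_proj 0).
Qed.
Lemma tot_tl g G : mtot g G -> mtot (MComp ctl [:: g]) (fun xs => tl (G xs)).
Proof. by move=> h; apply: tot_comp1 code_tl h. Qed.
Lemma tot_v2 g G : mtot g G -> mtot (MComp cv2 [:: g]) (fun xs => v2 (G xs)).
Proof. by move=> h; apply: tot_comp1 code_v2 h. Qed.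

Definition nthc j x := v2 (iter j tl x).
Lemma nthc_code j s : nthc j (CodeSeq.code s) = nth 0 s j.
Proof.
have i0 k : iter k tl 0 = 0 by elim: k => //= k ->; rewrite tl_0.
rewrite /nthc; elim: j s => [|j IH] [|a s] //=.
- by rewrite v2_cons.
- by rewrite i0.
- by rewrite -iterS iterSr tl_cons IH.
Qed.
Fixpoint citer j g := if j is j'.+1 then MComp ctl [:: citer j' g] else g.
Lemma tot_iter j g G : mtot g G -> mtot (citer j g) (fun xs => iter j tl (G xs)).
Proof. by move=> h; elim: j => //= j IH; apply: tot_tl. Qed.

Definition ipos z := v2 (v2 z).
Definition ineg z := (1 - v2 z) * (v2 (v2 (tl z))).+1.
Lemma ipos_pickle (z : int) : ipos (pickle z) = (if z is Posz n then n else 0).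
Proof.
case: z => n.
  have -> : pickle (Posz n) = CodeSeq.code [:: CodeSeq.code [:: n]; 0] by [].
  by rewrite /ipos v2_cons v2_cons.
have -> : pickle (Negz n) = CodeSeq.code [:: 0; CodeSeq.code [:: n]] by [].
by rewrite /ipos v2_cons.
Qed.
Lemma ineg_pickle (z : int) : ineg (pickle z) = (if z is Negz n then n.+1 else 0).
Proof.
case: z => n.
  have -> : pickle (Posz n) = CodeSeq.code [:: CodeSeq.code [:: n]; 0] by [].
  rewrite /ineg v2_cons [CodeSeq.code [:: n]]code_cons.
  by rewrite (_ : 1 - _ = 0) //; apply/eqP; rewrite subn_eq0 muln_gt0 expn_gt0.
have -> : pickle (Negz n) = CodeSeq.code [:: 0; CodeSeq.code [:: n]] by [].
by rewrite /ineg v2_cons tl_cons v2_cons v2_cons mul1n.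
Qed.
Lemma int_pn (z : int) : z = ((if z is Posz n then n else 0)%:Z - (if z is Negz n then n.+1 else 0)%:Z)%R.
Proof. by case: z => n; rewrite ?subr0 // sub0r. Qed.

Definition cipos g := MComp cv2 [:: MComp cv2 [:: g]].
Lemma tot_ipos g G : mtot g G -> mtot (cipos g) (fun xs => ipos (G xs)).
Proof. by move=> h; do 2 apply: tot_v2. Qed.
Definition cineg g := MComp cmul [:: MComp csub [:: cconst 1; MComp cv2 [:: g]];
   MComp csucc [:: cipos (MComp ctl [:: g])]].
Lemma tot_ineg g G : mtot g G -> mtot (cineg g) (fun xs => ineg (G xs)).
Proof.
move=> h; apply: tot_comp2 code_mul _ _.
  exact: tot_comp2 code_sub (tot_const 1) (tot_v2 h).
apply: tot_comp1 (code1_tot tot_succ) _.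
exact: tot_ipos (tot_tl h).
Qed.

Lemma pickle_rat (r : rat) : pickle r = CodeSeq.code [:: pickle (numq r); pickle (denq r)].
Proof. by []. Qed.

Definition qle_test x1 x2 :=
  let p1 := ipos (v2 x1) in let n1 := ineg (v2 x1) in let d1 := ipos (v2 (tl x1)) in
  let p2 := ipos (v2 x2) in let n2 := ineg (v2 x2) in let d2 := ipos (v2 (tl x2)) in
  (p1 * d2 + n2 * d1) - (p2 * d1 + n1 * d2).

Lemma qle_testP (r1 r2 : rat) : (qle_test (pickle r1) (pickle r2) == 0) = (r1 <= r2)%R.
Proof.
rewrite /qle_test !pickle_rat !v2_cons !tl_cons !v2_cons !ipos_pickle !ineg_pickle.
have -> : (r1 <= r2)%R = le_rat r1 r2 by [].
rewrite le_ratE.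
have d1 := denq_gt0 r1; have d2 := denq_gt0 r2.
rewrite [in RHS](int_pn (numq r1)) [in RHS](int_pn (numq r2)).
case: (denq r1) d1 => // e1 _; case: (denq r2) d2 => // e2 _.
rewrite subn_eq0.
case: (numq r1) => a; case: (numq r2) => b; lia.
Qed.

Definition cqle := MComp csub [::
  MComp cadd [:: MComp cmul [:: cipos (MComp cv2 [:: MProj 0]); cipos (MComp cv2 [:: MComp ctl [:: MProj 1]])];
                 MComp cmul [:: cineg (MComp cv2 [:: MProj 1]); cipos (MComp cv2 [:: MComp ctl [:: MProj 0]])]];
  MComp cadd [:: MComp cmul [:: cipos (MComp cv2 [:: MProj 1]); cipos (MComp cv2 [:: MComp ctl [:: MProj 0]])];
                 MComp cmul [:: cineg (MComp cv2 [:: MProj 0]); cipos (MComp cv2 [:: MComp ctl [:: MProj 1]])]]].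
Lemma code_qle : code2 cqle qle_test.
Proof.
have P0 := tot_proj 0; have P1 := tot_proj 1.
apply: (@code2_tot _ (fun xs => qle_test (nth 0 xs 0) (nth 0 xs 1))).
apply: tot_comp2 code_sub _ _.
  apply: tot_comp2 code_add _ _; apply: tot_comp2 code_mul _ _;
  by [apply: tot_ipos; apply: tot_v2 | apply: tot_ineg; apply: tot_v2|
      apply: tot_ipos; apply: tot_v2; apply: tot_tl].
apply: tot_comp2 code_add _ _; apply: tot_comp2 code_mul _ _;
by [apply: tot_ipos; apply: tot_v2 | apply: tot_ineg; apply: tot_v2|
    apply: tot_ipos; apply: tot_v2; apply: tot_tl].
Qed.

Definition ifz t a b := (1 - t) * a + (1 - (1 - t)) * b.
Lemma ifzE t a b : ifz t a b = if t == 0 then a else b.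
Proof. by rewrite /ifz; case: t => [|t]; rewrite ?subn0 ?mul1n ?mul0n ?addn0 // sub0n subn0 mul0n mul1n. Qed.
Definition cifz t a b := MComp cadd [:: MComp cmul [:: MComp csub [:: cconst 1; t]; a];
   MComp cmul [:: MComp csub [:: cconst 1; MComp csub [:: cconst 1; t]]; b]].
Lemma tot_ifz t T a A b B : mtot t T -> mtot a A -> mtot b B ->
  mtot (cifz t a b) (fun xs => ifz (T xs) (A xs) (B xs)).
Proof.
move=> ht ha hb; apply: tot_comp2 code_add _ _; apply: tot_comp2 code_mul _ _ => //.
  exact: tot_comp2 code_sub (tot_const 1) ht.
apply: tot_comp2 code_sub (tot_const 1) _.
exact: tot_comp2 code_sub (tot_const 1) ht.
Qed.

Definition qmaxn x1 x2 := ifz (qle_test x1 x2) x2 x1.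
Definition cqmax := cifz (MComp cqle [:: MProj 0; MProj 1]) (MProj 1) (MProj 0).
Lemma code_qmax : code2 cqmax qmaxn.
Proof.
apply: (@code2_tot _ (fun xs => qmaxn (nth 0 xs 0) (nth 0 xs 1))).
apply: tot_ifz (tot_proj 1) (tot_proj 0).
exact: tot_comp2 code_qle (tot_proj 0) (tot_proj 1).
Qed.
Lemma qmaxn_pickle (r1 r2 : rat) : qmaxn (pickle r1) (pickle r2) = pickle (Num.max r1 r2).
Proof.
rewrite /qmaxn ifzE qle_testP /Num.max.
by case: ltgtP => // ->.
Qed.

Definition cconsF := MComp cmul [:: MComp cpow2 [:: MProj 0]; MComp csucc [:: MComp cadd [:: MProj 1; MProj 1]]].
Lemma code_consF : code2 cconsF (fun a r => 2 ^ a * r.*2.+1).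
Proof.
apply: (@code2_tot _ (fun xs => 2 ^ (nth 0 xs 0) * (nth 0 xs 1).*2.+1)).
apply: tot_comp2 code_mul _ _.
  exact: tot_comp1 code_pow2 (tot_proj 0).
apply: tot_comp1 (code1_tot tot_succ) _.
by move=> xs; rewrite -addnn; exact: (tot_comp2 code_add (tot_proj 1) (tot_proj 1) xs).
Qed.
Definition clist (T : Type) (cf : T -> mucode) (keys : seq T) :=
  foldr (fun x r => MComp cconsF [:: cf x; r]) MZero keys.
Lemma tot_clist (T : Type) (cf : T -> mucode) (Ff : T -> seq nat -> nat) keys :
  (forall x, mtot (cf x) (Ff x)) ->
  mtot (clist cf keys) (fun xs => CodeSeq.code [seq Ff x xs | x <- keys]).
Proof.
move=> h; elim: keys => [|x keys IH] /=; first exact: tot_zero.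
exact: tot_comp2 code_consF (h x) IH.
Qed.

Lemma pickle_mx n (A : 'M[rat[i]]_n) : pickle A =
  CodeSeq.code [seq CodeSeq.code [:: pickle x; pickle (A x.1 x.2)] | x <- enum {: 'I_n * 'I_n}].
Proof.
case: A => f.
have -> : pickle (Matrix f) = pickle f by [].
have -> : pickle f = pickle (tval (tfgraph f)) by [].
rewrite /tfgraph /= /codom /image_mem -map_comp.
congr (CodeSeq.code _); rewrite -map_comp enumT; apply: eq_map => -[i j] /=.
by [].
Qed.

Lemma pickle_cplx (z : rat[i]) : pickle z = CodeSeq.code [:: pickle (complex.Re z); pickle (complex.Im z)].
Proof. by case: z. Qed.

Definition ext n (i : 'I_n) x :=
  v2 (v2 (tl (nthc (index (i, i) (enum {: 'I_n * 'I_n})) x))).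
Lemma ext_pickle n (i : 'I_n) (A : 'M[rat[i]]_n) :
  ext i (pickle A) = pickle (complex.Re (A i i)).
Proof.
rewrite /ext pickle_mx nthc_code.
have hi : (i, i) \in enum {: 'I_n * 'I_n} by rewrite mem_enum.
rewrite (nth_map (i, i)) ?index_mem // nth_index //.
by rewrite tl_cons v2_cons pickle_cplx v2_cons.
Qed.
Definition cext n (i : 'I_n) := MComp cv2 [:: MComp cv2 [:: MComp ctl [:: MComp cv2 [::
   citer (index (i, i) (enum {: 'I_n * 'I_n})) (MProj 0)]]]].
Lemma code_ext n (i : 'I_n) : code1 (cext i) (ext i).
Proof.
apply: (@code1_tot _ (fun xs => ext i (nth 0 xs 0))).
by apply: tot_v2; apply: tot_v2; apply: tot_tl; apply: tot_v2; apply: tot_iter; apply: tot_proj.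
Qed.

Lemma ev_comp1 c F g xs v : code1 c F -> mueval g xs v -> mueval (MComp c [:: g]) xs (F v).
Proof. by move=> hc hg; apply: ev_comp (hc v); do! constructor. Qed.
Lemma ev_comp2 c F g1 g2 xs v1 v2 : code2 c F -> mueval g1 xs v1 -> mueval g2 xs v2 ->
  mueval (MComp c [:: g1; g2]) xs (F v1 v2).
Proof. by move=> hc h1 h2; apply: ev_comp (hc v1 v2); do! constructor. Qed.

Fixpoint runmax (v : nat -> rat) n := if n is n'.+1 then Num.max (runmax v n') (v n) else v 0.

Lemma tr_runmax n (i : 'I_n) (f : nat -> bstring -> 'M[rat[i]]_n) :
  total_recursive2 f ->
  total_recursive2 (fun k s => runmax (fun l => complex.Re (f l s i i)) k).
Proof.
case=> e he.
pose g := MComp (cext i) [:: MComp e [:: MZero; MProj 0]].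
pose h := MComp cqmax [:: MProj 1; MComp (cext i) [:: MComp e [:: csucc; MProj 2]]].
exists (MPrec g h) => k s; have -> : pickle k = k by [].
elim: k => [|k IH] /=.
  apply: ev_prec0; rewrite -ext_pickle; apply: ev_comp1 (code_ext i) _.
  apply: ev_comp (he 0 s); do! constructor.
apply: ev_precS IH _.
rewrite -qmaxn_pickle; apply: ev_comp2 code_qmax _ _; first by constructor.
rewrite -ext_pickle; apply: ev_comp1 (code_ext i) _.
apply: ev_comp (he k.+1 s); constructor; first exact: (tot_succ [:: k; pickle (runmax _ k); pickle s]).
do! constructor.
Qed.


Local Open Scope ring_scope.
Local Open Scope complex_scope.
Definition cpair0 (g : mucode) := MComp cconsF [:: g; MComp cconsF [:: cconst (pickle (0%R : rat)); MZero]].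
Definition centry n (x : 'I_n * 'I_n) := MComp cconsF [:: cconst (pickle x);
   MComp cconsF [:: (if x.1 == x.2 then cpair0 (MProj 0) else cconst (pickle (0%R : rat[i]))); MZero]].
Definition cscal n := clist (@centry n) (enum {: 'I_n * 'I_n}).
Lemma code_scal n (q : rat) : mueval (cscal n) [:: pickle q] (pickle ((q%:C)%:M : 'M[rat[i]]_n)).
Proof.
pose Ff (x : 'I_n * 'I_n) (xs : seq nat) := CodeSeq.code [:: pickle x;
   if x.1 == x.2 then CodeSeq.code [:: nth 0%N xs 0%N; pickle (0%R : rat)] else pickle (0%R : rat[i])].
have := @tot_clist _ (@centry n) Ff (enum {: 'I_n * 'I_n}) _ [:: pickle q].
rewrite pickle_mx /=.
have -> : [seq Ff x [:: pickle q] | x <- enum {: 'I_n * 'I_n}] =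
  [seq CodeSeq.code [:: pickle x; pickle ((q%:C)%:M x.1 x.2 : rat[i])] | x <- enum {: 'I_n * 'I_n}].
  apply: eq_map => -[a b] /=; rewrite /Ff /= mxE.
  by case: (a == b) => //=; rewrite pickle_cplx.
apply.
move=> x xs /=; rewrite /centry /Ff.
apply: ev_comp2 code_consF _ _; first exact: tot_const.
apply: ev_comp2 code_consF _ _; last exact: tot_zero.
case: (x.1 == x.2); last exact: tot_const.
apply: ev_comp2 code_consF _ _; first exact: tot_proj.
apply: ev_comp2 code_consF _ _; [exact: tot_const | exact: tot_zero].
Qed.

Lemma tr_scal n (fm : nat -> bstring -> rat) : total_recursive2 fm ->
  total_recursive2 (fun k s => ((fm k s)%:C)%:M : 'M[rat[i]]_n).
Proof.
case=> e he; exists (MComp (cscal n) [:: e]) => k s.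
apply: ev_comp (code_scal n (fm k s)); do! constructor; exact: he.
Qed.

Lemma adjmxD (R : realType) m n (A B : 'M[R[i]]_(m, n)) : adjmx (A + B) = adjmx A + adjmx B.
Proof. by apply/matrixP => i j; rewrite !mxE /= rmorphD. Qed.
Lemma adjmxN (R : realType) m n (A : 'M[R[i]]_(m, n)) : adjmx (- A) = - adjmx A.
Proof. by apply/matrixP => i j; rewrite !mxE /= rmorphN. Qed.
Lemma adjmxB (R : realType) m n (A B : 'M[R[i]]_(m, n)) : adjmx (A - B) = adjmx A - adjmx B.
Proof. by rewrite adjmxD adjmxN. Qed.
Lemma adjmxZ (R : realType) m n (a : R[i]) (A : 'M[R[i]]_(m, n)) : adjmx (a *: A) = a^*%R *: adjmx A.
Proof. by apply/matrixP => i j; rewrite !mxE /= rmorphM. Qed.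
Lemma adjmxM (R : realType) m n p (A : 'M[R[i]]_(m, n)) (B : 'M[R[i]]_(n, p)) :
  adjmx (A *m B) = adjmx B *m adjmx A.
Proof. by rewrite /adjmx map_mxM trmx_mul. Qed.
Lemma adjmxK (R : realType) m n (A : 'M[R[i]]_(m, n)) : adjmx (adjmx A) = A.
Proof. by apply/matrixP => i j; rewrite !mxE /= conjCK. Qed.
Lemma adjmx_scalar (R : realType) n (a : R[i]) : adjmx (a%:M : 'M_n) = (a^*%R)%:M.
Proof. by apply/matrixP => i j; rewrite !mxE /= rmorphMn eq_sym. Qed.

Definition bf (R : realType) n (A : 'M[R[i]]_n) (x y : 'cV[R[i]]_n) := (adjmx x *m A *m y) 0 0.

Lemma bfDl (R : realType) n (A : 'M[R[i]]_n) x y z : bf A (x + y) z = bf A x z + bf A y z.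
Proof. by rewrite /bf adjmxD !mulmxDl mxE. Qed.
Lemma bfDr (R : realType) n (A : 'M[R[i]]_n) x y z : bf A z (x + y) = bf A z x + bf A z y.
Proof. by rewrite /bf !mulmxDr mxE. Qed.
Lemma bfNl (R : realType) n (A : 'M[R[i]]_n) x z : bf A (- x) z = - bf A x z.
Proof. by rewrite /bf adjmxN !mulNmx mxE. Qed.
Lemma bfNr (R : realType) n (A : 'M[R[i]]_n) x z : bf A z (- x) = - bf A z x.
Proof. by rewrite /bf !mulmxN mxE. Qed.
Lemma bfZl (R : realType) n (A : 'M[R[i]]_n) a x z : bf A (a *: x) z = a^*%R * bf A x z.
Proof. by rewrite /bf adjmxZ -!scalemxAl mxE. Qed.
Lemma bfZr (R : realType) n (A : 'M[R[i]]_n) a x z : bf A z (a *: x) = a * bf A z x.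
Proof. by rewrite /bf -!scalemxAr mxE. Qed.

Lemma bf_par (R : realType) n (A : 'M[R[i]]_n) u w :
  bf A (u + w) (u + w) + bf A (u - w) (u - w) = 2 * bf A u u + 2 * bf A w w.
Proof.
rewrite !bfDl !bfDr !bfNl !bfNr.
ring.
Qed.

Lemma adjmx_delta (R : realType) n (i : 'I_n) : adjmx (delta_mx i 0 : 'cV[R[i]]_n) = delta_mx 0 i.
Proof.
apply/matrixP => a b; rewrite !mxE /= andbC.
by case: (_ && _); rewrite ?rmorph1 ?rmorph0.
Qed.
Lemma bf_delta (R : realType) n (A : 'M[R[i]]_n) i j : bf A (delta_mx i 0) (delta_mx j 0) = A i j.
Proof. by rewrite /bf adjmx_delta -rowE -colE !mxE. Qed.

Definition nv (R : realType) n (v : 'cV[R[i]]_n) := bf 1%:M v v.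
Lemma nvE (R : realType) n (v : 'cV[R[i]]_n) : nv v = \sum_j (v j 0)^*%R * v j 0.
Proof. by rewrite /nv /bf mulmx1 !mxE; apply: eq_bigr => j _; rewrite !mxE. Qed.
Lemma nv_ge0 (R : realType) n (v : 'cV[R[i]]_n) : 0 <= nv v.
Proof. by rewrite nvE; apply: sumr_ge0 => j _; rewrite mulrC mul_conjC_ge0. Qed.
Lemma bf_scalar (R : realType) n (a : R[i]) (v : 'cV[R[i]]_n) : bf a%:M v v = a * nv v.
Proof. by rewrite /nv /bf mul_mx_scalar -scalemxAl mulmx1 mxE. Qed.

Lemma bfB (R : realType) n (A B : 'M[R[i]]_n) v : bf (A - B) v v = bf A v v - bf B v v.
Proof. by rewrite /bf mulmxBr mulmxBl !mxE. Qed.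
Lemma bfZ (R : realType) n (A : 'M[R[i]]_n) a v : bf (a *: A) v v = a * bf A v v.
Proof. by rewrite /bf -scalemxAr -scalemxAl mxE. Qed.

Lemma psd_scalar (R : realType) n (a : R[i]) : 0 <= a -> psdmx (a%:M : 'M_n).
Proof.
move=> a0; split; first by red; rewrite adjmx_scalar geC0_conj.
by move=> v; rewrite -/(bf _ v v) bf_scalar mulr_ge0 ?nv_ge0.
Qed.

Lemma psd_diag (R : realType) n (A : 'M[R[i]]_n) k : psdmx A -> 0 <= A k k.
Proof. by move=> [_ hA]; rewrite -(bf_delta A k k); apply: hA. Qed.

Lemma bf_sum_le (R : realType) n (A : 'M[R[i]]_n) (I : Type) (F : I -> 'cV_n) (l : seq I) :
  psdmx A ->
  bf A (\sum_(j <- l) F j) (\sum_(j <- l) F j) <= 2 ^+ size l * \sum_(j <- l) bf A (F j) (F j).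
Proof.
case=> _ hA; have q0 x : 0 <= bf A x x by exact: hA.
elim: l => [|x l IH]; first by rewrite !big_nil /bf mulmx0 mxE expr0 mul1r.
rewrite !big_cons /=.
set S := \sum_(j <- l) F j.
have h1 : bf A (F x + S) (F x + S) <= 2 * bf A (F x) (F x) + 2 * bf A S S.
  by rewrite -bf_par lerDl q0.
apply: le_trans h1 _.
rewrite exprS -mulrA mulrDr mulrDr; apply: lerD.
  rewrite ler_pM2l ?ltr0n //.
  have : 1 <= 2 ^+ size l :> R[i] by rewrite exprn_ege1 // ler1n.
  by move=> h; rewrite -[X in X <= _]mul1r ler_wpM2r ?q0.
by rewrite ler_pM2l ?ltr0n.
Qed.

Lemma cV_sum_delta (R : realType) n (v : 'cV[R[i]]_n) : v = \sum_j v j 0 *: delta_mx j 0.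
Proof.
rewrite {1}(matrix_sum_delta v); apply: eq_bigr => j _.
by rewrite big_ord1.
Qed.

Lemma psd_bound (R : realType) n (A : 'M[R[i]]_n) v : psdmx A ->
  bf A v v <= 2 ^+ n * (nv v * \sum_j A j j).
Proof.
move=> hA; have hd k := psd_diag k hA.
rewrite {1 2}(cV_sum_delta v).
apply: le_trans (bf_sum_le (fun j => v j 0 *: delta_mx j 0) (index_enum 'I_n) hA) _.
have -> : size (index_enum 'I_n) = n by rewrite /index_enum unlock -enumT size_enum_ord.
rewrite ler_pM2l ?exprn_gt0 ?ltr0n // nvE mulr_suml.
apply: ler_sum => j _.
rewrite bfZl bfZr bf_delta mulrA.
apply: ler_wpM2l; first by rewrite mulrC mul_conjC_ge0.
rewrite (bigD1 j) //= lerDl; apply: sumr_ge0 => k _; exact: hd.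
Qed.

Local Open Scope classical_set_scope.
Local Open Scope ring_scope.
Local Open Scope complex_scope.

Lemma conjR (R : realType) (x : R) : Num.conj (x%:C) = x%:C.
Proof. exact: conjc_real. Qed.

Lemma gmx_to_scal (R : realType) n (q : rat) :
  gmx_to R ((q%:C)%:M : 'M_n) = (((ratr q : R)%:C)%:M).
Proof.
apply/matrixP => i j; rewrite !mxE.
case: (i == j); rewrite ?mulr1n ?mulr0n /gauss_to /=; first by rewrite rmorph0.
by rewrite !rmorph0.
Qed.

Lemma sum_scal (R : realType) n (F : seq bstring) (g : bstring -> R) :
  \sum_(s <- F) (((g s)%:C)%:M : 'M[R[i]]_n) = (((\sum_(s <- F) g s)%:C)%:M).
Proof. by rewrite -raddf_sum -raddf_sum. Qed.

Lemma psd_scalR (R : realType) n (a : R) : 0 <= a -> psdmx ((a%:C)%:M : 'M[R[i]]_n).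
Proof. by move=> a0; apply: psd_scalar; rewrite ler0c. Qed.

Lemma mono_le_lim (R : realType) (u : nat -> rat) (L : R) :
  (forall n, (u n <= u n.+1)%R) -> (fun n => (ratr (u n) : R)) @ \oo --> L ->
  forall n, ratr (u n) <= L.
Proof.
move=> hu hc n.
have hom : {homo (fun n => (ratr (u n) : R)) : a b / (a <= b)%N >-> a <= b}.
  move=> a b /= hab; rewrite ler_rat.
  elim: b hab => [|b IH]; first by rewrite leqn0 => /eqP ->.
  rewrite leq_eqVlt => /orP [/eqP ->//|]; rewrite ltnS => /IH h.
  exact: le_trans h (hu b).
have := nondecreasing_cvgn_le hom (cvgP _ hc) n.
by rewrite (cvg_lim _ hc).
Qed.

Lemma cvgC_ext (R : realType) (u w : nat -> R[i]) z :
  (forall n, u n = w n) -> cvgC w z -> cvgC u z.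
Proof. by move=> h; rewrite (_ : u = w) //; apply: funext. Qed.

Lemma part1 (R : realType) (N : nat) (m : bstring -> R) :
  lower_computable_semi_measure m ->
  lower_computable_semi_POVM (fun s : bstring => (m s)%:C%:M : 'M[R[i]]_N).
Proof.
move=> [[m0 msum] [fm [trf cvf monf]]].
split.
  split; first by move=> s; apply: psd_scalR.
  move=> F uF; rewrite /loewner sum_scal -[1%:M]/((1%:C)%:M) -raddfB -raddfB.
  by apply: psd_scalR; rewrite subr_ge0; apply: msum.
exists (fun n s => ((fm n s)%:C)%:M); split.
- exact: tr_scal.
- move=> n s; rewrite /hermitian_Q gmx_to_scal; red.
  by rewrite adjmx_scalar conjR.
- move=> s i j.
  apply: (@cvgC_ext _ _ (fun n => if i == j then ((ratr (fm n s) : R)%:C) else 0)).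
    by move=> n; rewrite gmx_to_scal mxE; case: (i == j).
  rewrite /cvgC mxE; case: (i == j) => /=.
    by split; [exact: cvf | exact: cvg_cst].
  by split; exact: cvg_cst.
- move=> n s; rewrite /loewner gmx_to_scal -raddfB -raddfB; apply: psd_scalR.
  by rewrite subr_ge0; apply: mono_le_lim (cvf s) n => k; exact: monf.
Qed.

Lemma ge0_C (R : realType) (z : R[i]) : 0 <= z -> z = (complex.Re z)%:C /\ 0 <= complex.Re z.
Proof. by case: z => a b; rewrite lecE /= => /andP [/eqP -> ->]. Qed.

Lemma Re_sum (R : realType) (I : Type) (F : seq I) (g : I -> R[i]) :
  complex.Re (\sum_(s <- F) g s) = \sum_(s <- F) complex.Re (g s).
Proof.
elim: F => [|x F IH]; first by rewrite !big_nil.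
by rewrite !big_cons -IH; case: (g x); case: (\sum_(s <- F) g s).
Qed.
Lemma Re_sub (R : realType) (x y : R[i]) : complex.Re (x - y) = complex.Re x - complex.Re y.
Proof. by case: x; case: y. Qed.

Lemma runmax_ge (v : nat -> rat) n : v n <= runmax v n.
Proof. by case: n => //= n; rewrite le_max lexx orbT. Qed.
Lemma runmax_mono (v : nat -> rat) n : runmax v n <= runmax v n.+1.
Proof. by rewrite /= le_max lexx. Qed.
Lemma runmax_le (R : realType) (L : R) (v : nat -> rat) n :
  (forall k, ratr (v k) <= L) -> ratr (runmax v n) <= L.
Proof.
move=> h; elim: n => //= n IH.
by rewrite /Num.max; case: ifP.
Qed.

Lemma diag_lc (R : realType) (N : nat) (P : bstring -> 'M[R[i]]_N) (i : 'I_N) :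
  lower_computable_semi_POVM P ->
  lower_computable_semi_measure (fun s => complex.Re (P s i i)).
Proof.
move=> [[psdP sumP] [f [trf hermf cvf lef]]].
split.
  split; first by move=> s; have [_ ->] := ge0_C (psd_diag i (psdP s)).
  move=> F uF; have := psd_diag i (sumP F uF); rewrite !mxE summxE.
  move/ge0_C => [_]; rewrite Re_sub Re_sum subr_ge0.
  by rewrite eqxx.
exists (fun n s => runmax (fun l => complex.Re (f l s i i)) n); split.
- exact: tr_runmax.
- move=> s.
  pose u l := (ratr (complex.Re (f l s i i)) : R).
  have hu : u @ \oo --> complex.Re (P s i i).
    have -> : u = (fun n => complex.Re (gmx_to R (f n s) i i)).
      by apply: funext => n; rewrite mxE.
    by case: (cvf s i i).
  have hle l : u l <= complex.Re (P s i i).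
    have := psd_diag i (lef l s); rewrite !mxE.
    by move/ge0_C => [_]; rewrite Re_sub subr_ge0.
  apply: (squeeze_cvgr _ hu (cvg_cst (complex.Re (P s i i)))).
  apply: nearW => n; apply/andP; split.
    by rewrite ler_rat; exact: runmax_ge.
  exact: runmax_le.
- by move=> n s; exact: runmax_mono.
Qed.

Theorem mainTheorem3 (R : realType) (N : nat) (hN : (0 < N)%N)
  (m : bstring -> R) :
  universal_probability m ->
  universal_semi_POVM (fun s : bstring => (m s)%:C%:M : 'M[R[i]]_N).
Proof.
move=> [mlc mdom]; split; first exact: part1.
move=> P hP.
have hc : forall i : 'I_N, exists c : R, 0 < c /\ forall s, c * complex.Re (P s i i) <= m s.
  by move=> i; have [c c0 hc] := mdom _ (diag_lc i hP); exists c.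
have [cf hcf] := choice hc.
have cpos i : 0 < cf i by case: (hcf i).
pose K := \sum_i (cf i)^-1.
have K0 : 0 < K.
  rewrite /K (bigD1 (Ordinal hN)) //=.
  apply: (@lt_le_trans _ _ ((cf (Ordinal hN))^-1)); first by rewrite invr_gt0.
  by rewrite lerDl; apply: sumr_ge0 => i _; rewrite invr_ge0 ltW.
have hS s : \sum_i complex.Re (P s i i) <= K * m s.
  rewrite /K mulr_suml; apply: ler_sum => i _.
  case: (hcf i) => ci hci.
  rewrite -[complex.Re _](mulKf (lt0r_neq0 ci)).
  by apply: ler_wpM2l; [rewrite invr_ge0 ltW | exact: hci].
have [[psdP _] _] := hP.
pose c := (2 ^+ N * K)^-1.
have c0 : 0 < c by rewrite invr_gt0 mulr_gt0 ?exprn_gt0.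
exists c => // s; split.
  red; rewrite adjmxB adjmx_scalar conjR adjmxZ conjR.
  by case: (psdP s) => hh _; rewrite hh.
move=> v.
suff h : 0 <= bf ((m s)%:C%:M - c%:C *: P s) v v by exact: h.
rewrite bfB bf_scalar bfZ subr_ge0.
have hb := psd_bound v (psdP s).
have hT : \sum_j P s j j = (\sum_j complex.Re (P s j j))%:C.
  by rewrite raddf_sum; apply: eq_bigr => j _; exact: (ge0_C (psd_diag j (psdP s))).1.
apply: le_trans (ler_wpM2l _ hb) _; first by rewrite ler0c ltW.
rewrite hT; set S := \sum_j _.
have hR : c * 2 ^+ N * S <= m s.
  apply: le_trans (ler_wpM2l _ (hS s)) _; first by rewrite mulr_ge0 ?exprn_ge0 ?ltW.
  have -> : c * 2 ^+ N * (K * m s) = (c * (2 ^+ N * K)) * m s by rewrite !mulrA.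
  rewrite /c mulVf ?mul1r //.
  by rewrite mulf_neq0 ?lt0r_neq0 ?exprn_gt0.
have -> : c%:C * (2 ^+ N * (nv v * S%:C)) = nv v * (c * 2 ^+ N * S)%:C.
  by rewrite !rmorphM rmorphXn rmorph_nat; ring.
by rewrite [(m s)%:C * _]mulrC; apply: ler_wpM2l; [exact: nv_ge0 | rewrite lecR].
Qed.
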